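(* Let $\mathcal{T}$ be a set of monomials, and let $\mathcal{L}=(n,\mathcal{M},\mathcal{C})$ be a simple linearization with $\mathcal{S}\cup\mathcal{T}\subseteq\mathcal{M}$ such that every node of $D(\mathcal{L})$ with in-degree $0$ belongs to $\mathcal{T}$. Let $m_1,m_2,m_3\in\mathcal{T}$ be pairwise different with $m_1\cap m_2\cap m_3\neq\emptyset$ such that $m_3\cap(m_1\cup m_2)$ is a proper superset of both $m_3\cap m_1$ and $m_3\cap m_2$. Then $G(D(\mathcal{L}))$ contains a cycle.
   Context: $[n]=\{1,\dots,n\}$; a monomial is a nonempty subset of $[n]$; $\mathcal{S}=\{\{i\}:i\in[n]\}$. A linearization is a triple $\mathcal{L}=(n,\mathcal{M},\mathcal{C})$, where $\mathcal{M}$ is a set of monomials with $\mathcal{S}\subseteq\mathcal{M}$ and $\mathcal{C}$ is a set of AND-constraints; each AND-constraint is a set $c\subseteq\mathcal{M}$ whose union $\bigcup c$ (resultant) lies in $\mathcal{M}$. $\mathcal{P}=\mathcal{M}\setminus\mathcal{S}$. Linearizations are consistent: each $m\in\mathcal{P}$ is the resultant of some $c$ with $|m'|<|m|$ for all $m'\in c$. $\mathcal{L}$ is simple if each proper monomial is the resultant of exactly one AND-constraint and $|\mathcal{C}|=|\mathcal{P}|$. $D(\mathcal{L})$ has node set $\mathcal{M}$ and, for each $c\in\mathcal{C}$, arcs from $\bigcup c$ to each $m\in c$; $G(D(\mathcal{L}))$ is its underlying undirected graph. *)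

(* Defs.v *)
(* The ground set [n] = {1,..,n} is modelled by 'I_n. *)
From mathcomp Require Import all_boot.
Set Implicit Arguments. Unset Strict Implicit. Unset Printing Implicit Defensive.

(* A monomial is a nonempty subset of [n]; sets of monomials are sets of sets. *)
Notation mono n := {set 'I_n}.

Definition singletons (n : nat) : {set mono n} := [set [set i] | i : 'I_n].

Definition resultant (n : nat) (c : {set mono n}) : mono n := \bigcup_(m in c) m.

Definition is_linearization (n : nat) (M : {set mono n}) (C : {set {set mono n}}) : Prop :=
  [/\ forall m, m \in M -> m != set0,
      singletons n \subset M &
      forall c, c \in C -> c \subset M /\ resultant c \in M].

Definition proper_monos (n : nat) (M : {set mono n}) : {set mono n} := M :\: singletons n.

Definition consistent (n : nat) (M : {set mono n}) (C : {set {set mono n}}) : Prop :=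
  forall m, m \in proper_monos M ->
    exists2 c, c \in C & resultant c = m /\ (forall m', m' \in c -> #|m'| < #|m|).

Definition simple (n : nat) (M : {set mono n}) (C : {set {set mono n}}) : Prop :=
  (forall m, m \in proper_monos M -> #|[set c in C | resultant c == m]| = 1)
  /\ #|C| = #|proper_monos M|.

Definition arc (n : nat) (C : {set {set mono n}}) (u v : mono n) : bool :=
  [exists c in C, (resultant c == u) && (v \in c)].

Definition indeg0 (n : nat) (M : {set mono n}) (C : {set {set mono n}}) (m : mono n) : Prop :=
  forall u, u \in M -> ~~ arc C u m.

Definition uedge (n : nat) (C : {set {set mono n}}) (u v : mono n) : bool :=
  arc C u v || arc C v u.

Definition has_cycle (n : nat) (M : {set mono n}) (C : {set {set mono n}}) : Prop :=
  exists s : seq (mono n),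
    [/\ all (fun m => m \in M) s, uniq s, 3 <= size s & cycle (uedge C) s].

(* Main.v *)
Require Import Defs.
From mathcomp Require Import all_boot.
From Stdlib Require Classical_Prop.
Set Implicit Arguments. Unset Strict Implicit. Unset Printing Implicit Defensive.

Section UUP.
Variable T : eqType.
Variable e : rel T.
Hypothesis esym : symmetric e.
Hypothesis NC : forall s, uniq s -> 3 <= size s -> cycle e s -> False.

Lemma path_take u s k : path e u s -> path e u (take k s).
Proof. by rewrite -{1}(cat_take_drop k s) cat_path => /andP[]. Qed.

Lemma uup : forall p q u, path e u p -> path e u q -> uniq (u :: p) ->
  uniq (u :: q) -> last u p = last u q -> p = q.
Proof.
elim=> [|a p IH] [|b q] u //=.
- move=> _ _ _ /andP[uq _] El; by move: uq; rewrite El mem_last.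
- move=> _ _ /andP[up _] _ El; by move: up; rewrite -El mem_last.
move=> /andP[eua pa] /andP[eub qb] /andP[ua uP] /andP[ub uQ] El.
case: (a =P b) => [ab|nab].
  subst b; congr (_ :: _); exact: (IH q a).

exfalso.
set P := a :: p. set Q := b :: q.
have hasPQ : has (mem Q) P.
  apply/hasP; exists (last a p); first exact: mem_last.
  by rewrite /= El mem_last.
set i := find (mem Q) P.
have iP : i < size P by rewrite -has_find.
set w := nth u P i.
have wQ : w \in Q by exact: (nth_find u hasPQ).
set j := index w Q.
have jQ : j < size Q by rewrite index_mem.
have nwQ : nth u Q j = w by rewrite nth_index.
have ntake : ~~ has (mem Q) (take i P) by rewrite has_take // ltnn.
have pathP : path e u P by rewrite /= eua.
have pathQ : path e u Q by rewrite /= eub.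
apply: (NC (s := u :: (take i.+1 P ++ rev (take j Q)))).
  rewrite cons_uniq cat_uniq rev_uniq !take_uniq // andbT.
  apply/andP; split.
    rewrite mem_cat mem_rev negb_or; apply/andP; split.
      by apply/negP => /mem_take; rewrite (negbTE ua).
    by apply/negP => /mem_take; rewrite (negbTE ub).
  apply/hasPn => t; rewrite mem_rev => tj.
  rewrite (take_nth u iP) mem_rcons inE; apply/negP => /orP[/eqP tw|ti].
    by move: tj; rewrite tw => /index_ltn; rewrite ltnn.
  by move/hasPn: ntake => /(_ t ti) /negP; apply; exact: mem_take tj.
- change (2 < (size (take i.+1 P ++ rev (take j Q))).+1).
  rewrite size_cat size_rev (size_takel iP) (size_takel (ltnW jQ)).
  rewrite ltnS addSn ltnS addn_gt0.
  case: (posnP i) => [i0|//]; case: (posnP j) => [j0|jp]; last by apply/orP; right.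
  exfalso; apply: nab.
  have wa : w = a by rewrite /w i0.
  have bw : nth u Q j = b by rewrite j0.
  by rewrite -wa -bw nwQ.
- change (path e u (rcons (take i.+1 P ++ rev (take j Q)) u)).
  rewrite rcons_cat cat_path path_take //.
  rewrite (take_nth u iP) last_rcons -/w -rev_cons.
  have -> : u :: take j Q = belast u (take j.+1 Q)
    by rewrite (take_nth u jQ) belast_rcons.
  have {1}-> : w = last u (take j.+1 Q) by rewrite (take_nth u jQ) last_rcons.
  rewrite rev_path (eq_path (e' := e)); first exact: path_take.
  by move=> x y; rewrite /= esym.
Qed.
End UUP.

Section Main.
Variable n : nat.
Variable M : {set mono n}.
Variable C : {set {set mono n}}.

Definition darc (u v : mono n) := Defs.arc C u v && (v != u).
Notation reach := (connect darc).

Lemma darc_proper u v : darc u v -> v \proper u.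
Proof.
case/andP=> /existsP[c /andP[cC /andP[/eqP Ru vc]]] nvu.
rewrite properEneq nvu /= -Ru; exact: (bigcup_sup _ vc).
Qed.

Lemma darc_uedge u v : darc u v -> uedge C u v.
Proof. by case/andP=> h _; rewrite /uedge h. Qed.

Lemma dpath_uniq u p : path darc u p -> uniq (u :: p).
Proof.
move=> pth.
have tr : transitive (fun a b : mono n => b \proper a).
  by move=> y x z h1 h2; exact: proper_trans h2 h1.
have irr : irreflexive (fun a b : mono n => b \proper a) by move=> x; rewrite /= properxx.
apply: (sorted_uniq tr irr).
by apply: sub_path pth => a b /darc_proper.
Qed.

Lemma reach_sub u v : reach u v -> v \subset u.
Proof.
case/connectP=> p pth ->; elim: p u pth => [|a p IH] u /=; first by move=> _.
case/andP=> h pth; apply: subset_trans (IH _ pth) _.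
exact: proper_sub (darc_proper h).
Qed.

Lemma on_path u p w : path darc u p -> w \in u :: p ->
  reach u w /\ reach w (last u p).
Proof.
move=> pth wi; split; first by apply: (path_connect pth).
move: wi; rewrite inE => /predU1P[->|wp]; first by apply: (path_connect pth); apply: mem_last.
move: pth; case/splitPr: wp => p1 p2; rewrite cat_path last_cat /=.
by case/and3P=> _ _ h; by apply: (path_connect h); apply: mem_last.
Qed.

Lemma descend m x : is_linearization M C -> consistent M C -> m \in M -> x \in m ->
  reach m [set x].
Proof.
move=> L Co; case: L => _ sM cCM.
have [k lek] := ubnP #|m|; elim: k m lek => // k IH m Hm mM xm.
case: (boolP (m \in singletons n)) => [/imsetP[i _ mi]|ns].
  by move: xm; rewrite mi in_set1 => /eqP ->.
have mP : m \in proper_monos M by rewrite /proper_monos in_setD ns mM.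
have [c cC [Rc sm]] := Co m mP.
move: xm; rewrite -{1}Rc => /bigcupP[v vc xv].
have vM : v \in M by have [/subsetP h _] := cCM c cC; exact: h.
have dv : darc m v.
  apply/andP; split; first by apply/existsP; exists c; rewrite cC Rc eqxx vc.
  by apply/eqP => E; move: (sm v vc); rewrite E ltnn.
apply: connect_trans (connect1 dv) (IH v _ vM xv).
by apply: leq_trans (sm v vc) _; rewrite -ltnS.
Qed.

Definition minimal X Z c := forall a, darc c a -> ~~ (reach a X && reach a Z).

Lemma minanc X Z u : reach u X -> reach u Z ->
  exists c, [/\ reach u c, reach c X, reach c Z & minimal X Z c].
Proof.
have [k lek] := ubnP #|u|; elim: k u lek => // k IH u Hu uX uZ.
case: (boolP [exists a, darc u a && (reach a X && reach a Z)]).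
  case/existsP=> a /andP[ua /andP[aX aZ]].
  have /proper_card au := darc_proper ua.
  have [|c [ac cX cZ mc]] := IH a _ aX aZ; first by apply: leq_trans au _.
  by exists c; split=> //; apply: connect_trans (connect1 ua) ac.
move=> nex; exists u; split=> // a ua; apply/negP => h.
by move/existsP: nex; apply; exists a; rewrite ua h.
Qed.

Lemma last_rev_belast (c : mono n) (p : seq (mono n)) : last (last c p) (rev (belast c p)) = c.
Proof. by case: p => [|a p] //=; rewrite rev_cons last_rcons. Qed.

Lemma vpath X Z c p q : path darc c p -> X = last c p -> path darc c q -> Z = last c q ->
  minimal X Z c ->
  [/\ path (uedge C) X (rev (belast c p) ++ q), uniq (X :: rev (belast c p) ++ q),
      last X (rev (belast c p) ++ q) = Z, c \in X :: rev (belast c p) ++ q &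
      forall w, w \in X :: rev (belast c p) ++ q -> reach c w].
Proof.
move=> pp EX pq EZ mc.
have E : X :: rev (belast c p) ++ q = rev (c :: p) ++ q.
  by rewrite -cat_cons EX [c :: p]lastI rev_rcons.
rewrite E; split.
- rewrite cat_path EX last_rev_belast (sub_path darc_uedge pq) andbT.
  have h : path (fun z => (uedge C)^~ z) c p = path (uedge C) c p.
    by apply: eq_path => a b; rewrite /uedge /= orbC.
  rewrite rev_path h; apply: (sub_path _ pp); exact: darc_uedge.
- rewrite cat_uniq rev_uniq dpath_uniq //=.
  have := dpath_uniq pq; rewrite cons_uniq => /andP[cq ->]; rewrite andbT.
  apply/hasPn => w wq; rewrite mem_rev inE negb_or; apply/andP; split.
    by apply/eqP => wc; move: cq; rewrite -wc wq.
  apply/negP => wp.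
  clear E; case: p pp EX wp => // a p /= /andP[ca pa] EX wp.
  have wcq : w \in c :: q by rewrite inE wq orbT.
  have [_ wZ] := on_path pq wcq.
  have [aw wX] := on_path pa wp.
  move/negP: (mc a ca); apply; rewrite EX EZ.
  by rewrite (connect_trans aw wX) (connect_trans aw wZ).
- by rewrite last_cat EX last_rev_belast EZ.
- by rewrite mem_cat mem_rev mem_head.
- move=> w; rewrite mem_cat mem_rev => /orP[wp|wq].
    by have [] := on_path pp wp.
  have wcq : w \in c :: q by rewrite inE wq orbT.
  by have [] := on_path pq wcq.
Qed.

Lemma uedge_sym : symmetric (uedge C).
Proof. by move=> a b; rewrite /uedge orbC. Qed.

Lemma uedge_M u v : is_linearization M C -> uedge C u v -> u \in M.
Proof.
case=> _ _ cCM; case/orP => /existsP[c /andP[cC /andP[/eqP Ru vc]]].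
  by have [_ h] := cCM c cC; rewrite -Ru.
by have [/subsetP h _] := cCM c cC; exact: h.
Qed.

Lemma min_reach (NC : forall s, uniq s -> 3 <= size s -> cycle (uedge C) s -> False)
  X Z c d : reach c X -> reach c Z -> minimal X Z c ->
  reach d X -> reach d Z -> minimal X Z d -> reach d c.
Proof.
move=> cX cZ mc dX dZ md.
case/connectP: cX => p pp EX; case/connectP: cZ => q pq EZ.
case/connectP: dX => p' pp' EX'; case/connectP: dZ => q' pq' EZ'.
have [h1 h2 h3 h4 _] := vpath pp EX pq EZ mc.
have [h1' h2' h3' _ h5'] := vpath pp' EX' pq' EZ' md.
have E := uup uedge_sym NC h1 h1' h2 h2' (etrans h3 (Logic.eq_sym h3')).
by apply: h5'; rewrite -E.
Qed.

End Main.

Theorem lemma4p4 (n : nat) (T M : {set {set 'I_n}}) (C : {set {set {set 'I_n}}})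
    (m1 m2 m3 : {set 'I_n}) :
  (forall m, m \in T -> m != set0) ->
  is_linearization M C -> consistent M C -> simple M C ->
  singletons n :|: T \subset M ->
  (forall m, m \in M -> indeg0 M C m -> m \in T) ->
  m1 \in T -> m2 \in T -> m3 \in T ->
  m1 != m2 -> m1 != m3 -> m2 != m3 ->
  m1 :&: m2 :&: m3 != set0 ->
  m3 :&: m1 \proper m3 :&: (m1 :|: m2) ->
  m3 :&: m2 \proper m3 :&: (m1 :|: m2) ->
  has_cycle M C.
Proof.
move=> _ L Co _ sub _ m1T m2T m3T _ _ _ ne prop1 prop2.
apply: Classical_Prop.NNPP => NCy.
have NC : forall s, uniq s -> 3 <= size s -> cycle (uedge C) s -> False.
  move=> s us ss cs; apply: NCy; exists s; split=> //.
  apply/allP => w ws; have := next_cycle cs ws; exact: uedge_M L.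
case/set0Pn: ne => x; rewrite !inE => /andP[/andP[xm1 xm2] xm3].
case/properP: prop1 => _ [y]; rewrite !inE => /andP[ym3 ym12]; rewrite ym3 /= => ym1.
have ym2 : y \in m2 by move: ym12; rewrite (negbTE ym1).
case/properP: prop2 => _ [z]; rewrite !inE => /andP[zm3 zm12]; rewrite zm3 /= => zm2.
have zm1 : z \in m1 by move: zm12; rewrite (negbTE zm2) orbF.
have inM : forall m, m \in T -> m \in M.
  by move=> m mT; apply: (subsetP sub); rewrite inE mT orbT.
have R : forall m t, m \in T -> t \in m -> connect (darc C) m [set t].
  by move=> m t mT tm; exact: descend L Co (inM m mT) tm.
have [c [m3c cX cZ mc]] := minanc (R m3 x m3T xm3) (R m3 z m3T zm3).
have [d [m1d dX dZ md]] := minanc (R m1 x m1T xm1) (R m1 z m1T zm1).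
have [c' [m3c' c'X c'Y mc']] := minanc (R m3 x m3T xm3) (R m3 y m3T ym3).
have [d' [m2d' d'X d'Y md']] := minanc (R m2 x m2T xm2) (R m2 y m2T ym2).
have cm1 : c \subset m1 := reach_sub (connect_trans m1d (min_reach NC cX cZ mc dX dZ md)).
have c'm2 : c' \subset m2 :=
  reach_sub (connect_trans m2d' (min_reach NC c'X c'Y mc' d'X d'Y md')).
case/connectP: m3c => pa ppa Ec; case/connectP: (cX) => pb ppb EX.
case/connectP: m3c' => pa' ppa' Ec'; case/connectP: (c'X) => pb' ppb' EX'.
have P1 : path (darc C) m3 (pa ++ pb) by rewrite cat_path ppa -Ec ppb.
have P2 : path (darc C) m3 (pa' ++ pb') by rewrite cat_path ppa' -Ec' ppb'.
have L1 : last m3 (pa ++ pb) = [set x] by rewrite last_cat -Ec -EX.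
have L2 : last m3 (pa' ++ pb') = [set x] by rewrite last_cat -Ec' -EX'.
have U1 : path (uedge C) m3 (pa ++ pb) by apply: (sub_path _ P1); exact: darc_uedge.
have U2 : path (uedge C) m3 (pa' ++ pb') by apply: (sub_path _ P2); exact: darc_uedge.
have E := uup (@uedge_sym _ C) NC U1 U2 (dpath_uniq P1) (dpath_uniq P2) (etrans L1 (Logic.eq_sym L2)).
have cin : c \in m3 :: pa' ++ pb' by rewrite -E -cat_cons mem_cat Ec mem_last.
move: cin; rewrite -cat_cons mem_cat => /orP[ci|ci].
  have [_ cc'] := on_path ppa' ci; rewrite -Ec' in cc'.
  apply: (negP ym1); apply: (subsetP cm1); apply: (subsetP (reach_sub cc')).
  by apply: (subsetP (reach_sub c'Y)); exact: set11.
have ci' : c \in c' :: pb' by rewrite inE ci orbT.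
have [cc _] := on_path ppb' ci'.
apply: (negP zm2); apply: (subsetP c'm2); apply: (subsetP (reach_sub cc)).
by apply: (subsetP (reach_sub cZ)); exact: set11.
Qed.
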